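(* Let $f\colon\underline I=I_1\times\cdots\times I_n\to\mathbb R$ be a convex function ($I_i$ intervals) and let $H$ be a finite-dimensional Hilbert space. Let $\underline x=(x_1,\dots,x_n)$ and $\underline y=(y_1,\dots,y_n)$ be abelian $n$-tuples of self-adjoint operators on $H$ with $\sigma(x_i),\sigma(y_i)\subseteq I_i$, which are compatible, i.e. $[x_i,y_j]=[x_j,y_i]$ for all $i,j=1,\dots,n$. Then $$f(\lambda\underline x+(1-\lambda)\underline y)\prec_w\lambda f(\underline x)+(1-\lambda)f(\underline y)\qquad\text{for all }\lambda\in[0,1].$$
   Context: An $n$-tuple is abelian if its entries commute; $[a,b]=ab-ba$. $f$ of an abelian tuple of self-adjoint operators is defined by joint functional calculus; $\lambda\underline x+(1-\lambda)\underline y$ is taken entrywise. For a self-adjoint operator $x$ on an $m$-dimensional Hilbert space, $x_{[1]}\ge\cdots\ge x_{[m]}$ are its eigenvalues counted with multiplicity in decreasing order, and $x\prec_w y$ means $\sum_{i=1}^k x_{[i]}\le\sum_{i=1}^k y_{[i]}$ for $k=1,\dots,m$. *)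

(* Defs.v *)
From HB Require Import structures.
From mathcomp Require Import all_boot all_order all_algebra.
From mathcomp Require Import complex.
From mathcomp Require Import reals.
From Stdlib Require Import ClassicalEpsilon.

Set Implicit Arguments.
Unset Strict Implicit.
Unset Printing Implicit Defensive.

Import Order.TTheory GRing.Theory Num.Theory.
Local Open Scope ring_scope.
Local Open Scope sesquilinear_scope.

Section Defs.
Variable R : realType.
Local Notation C := R[i].

Definition toC (t : R) : C := Complex t 0.

(* self-adjoint operators on the m-dimensional Hilbert space C^m *)
Definition selfadj m (x : 'M[C]_m) : Prop := x \is hermsymmx.

Definition spec_in m (x : 'M[C]_m) (I : interval R) : Prop :=
  forall a : C, eigenvalue x a -> exists2 t : R, t \in I & a = toC t.

Definition abelian_tuple n m (xs : 'I_n -> 'M[C]_m) : Prop :=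
  forall i j, xs i *m xs j = xs j *m xs i.

Definition commut m (a b : 'M[C]_m) : 'M[C]_m := a *m b - b *m a.

Definition compatible n m (xs ys : 'I_n -> 'M[C]_m) : Prop :=
  forall i j, commut (xs i) (ys j) = commut (xs j) (ys i).

Definition jfc_rel n m (f : ('I_n -> R) -> R) (xs : 'I_n -> 'M[C]_m)
    (F : 'M[C]_m) : Prop :=
  exists (U : 'M[C]_m) (d : 'I_n -> 'rV[R]_m),
    [/\ U \is unitarymx,
        forall i, xs i = U ^t* *m diag_mx (map_mx toC (d i)) *m U
      & F = U ^t* *m diag_mx (\row_k toC (f (fun i => d i 0 k))) *m U].

(* joint functional calculus f(xs) (well defined for abelian tuples of
   self-adjoint operators, where it is unique) *)
Definition jfc n m (f : ('I_n -> R) -> R) (xs : 'I_n -> 'M[C]_m) : 'M[C]_m :=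
  epsilon (inhabits 0) (jfc_rel f xs).

(* the eigenvalues of x counted with (algebraic) multiplicity, as a list of
   reals: the roots of the characteristic polynomial *)
Definition eig_list m (x : 'M[C]_m) : seq R :=
  epsilon (inhabits [::])
    (fun s : seq R => char_poly x = \prod_(t <- s) ('X - (toC t)%:P)).

Definition eigs_dec m (x : 'M[C]_m) : seq R := sort (fun a b => b <= a) (eig_list x).

Definition weak_major m (x y : 'M[C]_m) : Prop :=
  forall k : nat, (1 <= k <= m)%N ->
    \sum_(i < k) nth 0 (eigs_dec x) i <= \sum_(i < k) nth 0 (eigs_dec y) i.

Definition convex_on_box n (I : 'I_n -> interval R) (f : ('I_n -> R) -> R) : Prop :=
  forall u v : 'I_n -> R, (forall i, u i \in I i) -> (forall i, v i \in I i) ->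
  forall l : R, 0 <= l <= 1 ->
    f (fun i => l * u i + (1 - l) * v i) <= l * f u + (1 - l) * f v.

End Defs.

(* Main.v *)
Require Import Defs.
From HB Require Import structures.
From mathcomp Require Import all_boot all_order all_algebra.
From mathcomp Require Import complex.
From mathcomp Require Import reals.
From mathcomp Require Import ring lra.
From mathcomp Require Import fingroup perm.
From Stdlib Require Import ClassicalEpsilon FunctionalExtensionality.
Import Order.TTheory GRing.Theory Num.Theory.
Local Open Scope ring_scope.
Set Implicit Arguments. Unset Strict Implicit. Unset Printing Implicit Defensive.

Section Aux.
Local Open Scope complex_scope.
Variable R : realType.
Local Notation C := R[i].

Lemma itv_between (I : interval R) (a b c : R) :
  a \in I -> b \in I -> a <= c -> c <= b -> c \in I.
Proof.
case: I => bl br; rewrite !itv_boundlr => /andP[ha _] /andP[_ hb] hac hcb.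
apply/andP; split.
  by apply: (le_trans ha); rewrite bnd_simp.
by apply: le_trans hb; rewrite bnd_simp.
Qed.

Lemma itv_conv (I : interval R) (a b l : R) :
  a \in I -> b \in I -> 0 <= l <= 1 -> l * a + (1 - l) * b \in I.
Proof.
move=> ha hb /andP[l0 l1].
have [hab|hba] := leP a b.
  by apply: (itv_between ha hb); nra.
by apply: (itv_between hb ha); nra.
Qed.

Lemma toCE (t : R) : toC t = t%:C.
Proof. by []. Qed.

Lemma toCD (s t : R) : toC (s + t) = toC s + toC t.
Proof. by rewrite !toCE rmorphD. Qed.
Lemma toCM (s t : R) : toC (s * t) = toC s * toC t.
Proof. by rewrite !toCE rmorphM. Qed.
Lemma toCB (s t : R) : toC (s - t) = toC s - toC t.
Proof. by rewrite !toCE rmorphB. Qed.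
Lemma toC1 : toC (1:R) = 1. Proof. by rewrite toCE rmorph1. Qed.
Lemma toC0 : toC (0:R) = 0. Proof. by rewrite toCE rmorph0. Qed.
Lemma toC_sum (I : finType) (F : I -> R) : toC (\sum_i F i) = \sum_i toC (F i).
Proof. by rewrite toCE rmorph_sum. Qed.
Lemma toC_inj : injective (@toC R).
Proof. by move=> x y []. Qed.
Lemma toC_conj (t : R) : (toC t)^* = toC t.
Proof. by rewrite /toC /= oppr0. Qed.

Definition sqn (c : C) : R := (complex.Re c) ^+ 2 + (complex.Im c) ^+ 2.
Lemma sqn_ge0 c : 0 <= sqn c.
Proof. by rewrite /sqn addr_ge0 // sqr_ge0. Qed.
Lemma mul_conj_sqn c : c * c^* = toC (sqn c).
Proof. case: c => a b; rewrite /sqn /toC /=. congr Complex; ring. Qed.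
Lemma sqn_conj c : sqn c^* = sqn c.
Proof. case: c => a b; rewrite /sqn /=; ring. Qed.

Local Open Scope sesquilinear_scope.

Lemma diag_quad m p (Q : 'M[C]_(p,m)) (g : 'I_m -> R) k :
  (Q *m diag_mx (\row_j toC (g j)) *m Q^t*) k k = toC (\sum_j g j * sqn (Q k j)).
Proof.
rewrite mul_mx_diag !mxE toC_sum; apply: eq_bigr => j _.
rewrite !mxE toCM -mul_conj_sqn; ring.
Qed.

Lemma unitary_l m (U : 'M[C]_m) : U \is unitarymx -> U^t* *m U = 1%:M.
Proof. by move/unitarymxP/mulmx1C. Qed.
Lemma unitary_r m (U : 'M[C]_m) : U \is unitarymx -> U *m U^t* = 1%:M.
Proof. by move/unitarymxP. Qed.

Lemma row_const1 m : (\row_(j < m) toC (1:R)) = const_mx 1.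
Proof. by apply/matrixP => i j; rewrite !mxE toC1. Qed.

Lemma sqn_row m (Q : 'M[C]_m) k : Q \is unitarymx -> \sum_j sqn (Q k j) = 1.
Proof.
move=> uQ; have := diag_quad Q (fun _ => 1) k.
rewrite row_const1 diag_const_mx mulmx1 unitary_r // mxE eqxx /=.
under eq_bigr do rewrite mul1r.
by rewrite -toC1 => /toC_inj ->.
Qed.

Lemma sqn_col m (Q : 'M[C]_m) j : Q \is unitarymx -> \sum_k sqn (Q k j) = 1.
Proof.
move=> uQ; rewrite -(@sqn_row _ (Q^t*) j) ?trmxC_unitary //.
by apply: eq_bigr => k _; rewrite !mxE sqn_conj.
Qed.

Lemma eig_diag m (U : 'M[C]_m) (g : 'I_m -> R) k : U \is unitarymx ->
  eigenvalue (U^t* *m diag_mx (\row_j toC (g j)) *m U) (toC (g k)).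
Proof.
move=> uU; apply/eigenvalueP; exists (delta_mx 0 k *m U).
  rewrite !mulmxA -(mulmxA _ U) unitary_r // mulmx1 -[_ *m diag_mx _]rowE.
  by rewrite row_diag_mx mxE scalemxAl.
apply/eqP => /(congr1 (fun v => v *m U^t*)); rewrite -mulmxA unitary_r // mulmx1 mul0mx.
by move/matrixP/(_ 0 k); rewrite !mxE !eqxx /= => /eqP; rewrite oner_eq0.
Qed.


Lemma herm_trig_diag m (T : 'M[C]_m) : is_trig_mx T -> T^t* = T ->
  T = diag_mx (\row_k toC (complex.Re (T k k))).
Proof.
move=> /is_trig_mxP tT hT; have hTE a b : T a b = (T b a)^*.
  by rewrite -{1}hT !mxE.
apply/matrixP => a b; rewrite !mxE.
case: (eqVneq a b) => [<-|hab] /=.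
  have := hTE a a; case: (T a a) => x y /= [] hy.
  rewrite mulr1n /toC; congr Complex; lra.
rewrite mulr0n; have [hlt|hgt] := ltnP a b; first by rewrite tT.
rewrite hTE tT; first by rewrite /= oppr0.
by rewrite ltn_neqAle hgt andbT eq_sym.
Qed.

Lemma simdiag n m (xs : 'I_n -> 'M[C]_m) :
  (forall i, xs i \is hermsymmx) -> (forall i j, xs i *m xs j = xs j *m xs i) ->
  exists U (d : 'I_n -> 'I_m -> R), U \is unitarymx /\
    forall i, xs i = U^t* *m diag_mx (\row_k toC (d i k)) *m U.
Proof.
move=> hh hc.
have hcm : {in [seq xs i | i <- enum 'I_n] &, forall A B, comm_mx A B}.
  by move=> A B /mapP [i _ ->] /mapP [j _ ->]; exact: hc.
have [P uP /allP hP] := @cotrigonalization C m [seq xs i | i <- enum 'I_n] hcm.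
exists P, (fun i k => complex.Re ((P *m xs i *m P^t*) k k)); split => // i.
  have ht : is_trig_mx (P *m xs i *m P^t*).
    have := hP (xs i) (map_f _ (mem_enum _ i)).
    by rewrite /= /similar_to conjumx ?unitarymx_unit // invmx_unitary.
  have hT : (P *m xs i *m P^t*)^t* = P *m xs i *m P^t*.
    have := hh i => /is_hermitianmxP; rewrite expr0 scale1r => hx.
    rewrite !trmx_mul !map_mxM trmxCK mulmxA -hx //.
  rewrite -herm_trig_diag // !mulmxA unitary_l // mul1mx -mulmxA unitary_l //.
  by rewrite mulmx1.
Qed.


Lemma char_poly_conj m (U D : 'M[C]_m) : U \is unitarymx ->
  char_poly (U^t* *m D *m U) = char_poly D.
Proof.
move=> uU; rewrite /char_poly /char_poly_mx.
set pU := map_mx (@polyC C) U; set pV := map_mx (@polyC C) (U^t*).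
have hVU : pV *m pU = 1%:M by rewrite -map_mxM unitary_l // map_mx1.
have -> : 'X%:M - map_mx polyC (U^t* *m D *m U) =
    pV *m ('X%:M - map_mx polyC D) *m pU.
  rewrite !map_mxM mulmxBr mulmxBl scalar_mxC -/pV -/pU -['X%:M *m pV *m pU]mulmxA hVU mulmx1.
  by [].
rewrite !det_mulmx mulrC mulrA -det_mulmx.
by rewrite (mulmx1C hVU) det1 mul1r.
Qed.

Lemma eig_list_diag m (U : 'M[C]_m) (g : 'I_m -> R) : U \is unitarymx ->
  perm_eq (eig_list (U^t* *m diag_mx (\row_j toC (g j)) *m U))
          [seq g j | j <- enum 'I_m].
Proof.
move=> uU; set A := U^t* *m _ *m U.
have hA : char_poly A = \prod_(t <- [seq g j | j <- enum 'I_m]) ('X - (toC t)%:P).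
  rewrite char_poly_conj // char_poly_trig // big_map big_enum /=.
  by apply: eq_bigr => j _; rewrite !mxE eqxx mulr1n.
have hs := epsilon_spec (inhabits [::])
   (fun s : seq R => char_poly A = \prod_(t <- s) ('X - (toC t)%:P))
   (ex_intro _ _ hA).
rewrite /eig_list; move: hs => /=.
move=> hs.
apply: (@perm_map_inj _ _ (@toC R) toC_inj).
apply: prod_XsubC_eq; rewrite big_map -hs hA.
by rewrite !big_map.
Qed.


Definition geR := fun a b : R => b <= a.

Lemma geR_total : total geR.
Proof. by move=> a b; rewrite /geR le_total. Qed.
Lemma geR_trans : transitive geR.
Proof. by move=> a b c; rewrite /geR => h1 h2; apply: le_trans h2 h1. Qed.
Lemma geR_anti : antisymmetric geR.
Proof. by move=> a b /andP[h1 h2]; apply/le_anti; rewrite /geR in h1 h2; rewrite h1 h2. Qed.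
Lemma geR_refl : reflexive geR.
Proof. by move=> a; rewrite /geR lexx. Qed.

Lemma eigs_dec_diag m (U : 'M[C]_m) (g : 'I_m -> R) : U \is unitarymx ->
  eigs_dec (U^t* *m diag_mx (\row_j toC (g j)) *m U) =
  sort geR [seq g j | j <- enum 'I_m].
Proof.
move=> uU; rewrite /eigs_dec.
by apply/(perm_sortP geR_total geR_trans geR_anti)/eig_list_diag.
Qed.

Lemma sort_perm m (g : 'I_m -> R) : exists s : 'S_m,
  (forall i : 'I_m, nth 0 (sort geR [seq g j | j <- enum 'I_m]) i = g (s i)) /\
  (forall i j : 'I_m, (i <= j)%N -> g (s j) <= g (s i)).
Proof.
pose t := map_tuple g (ord_tuple m).
have : perm_eq (sort geR [seq g j | j <- enum 'I_m]) t.
  by rewrite perm_sort /=.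
move=> /tuple_permP [p hp]; exists p.
have hn (i : 'I_m) : nth 0 (sort geR [seq g j | j <- enum 'I_m]) i = g (p i).
  rewrite hp /= (nth_map i) ?size_enum_ord //.
  by rewrite nth_ord_enum tnth_map tnth_ord_tuple.
split=> // i j hij; rewrite -!hn.
have := @sorted_leq_nth _ geR geR_trans geR_refl 0 _ (sort_sorted geR_total _) i j.
move=> /(_ [seq g j0 | j0 <- enum 'I_m]); rewrite !inE size_sort size_map size_enum_ord !ltn_ord; apply => //.
Qed.


Lemma sum_ind m k : (k <= m)%N ->
  \sum_(i < m) (if (i < k)%N then 1 else 0 : R) = k%:R.
Proof.
move=> hkm; rewrite -big_mkcond /=.
rewrite -(big_ord_widen _ (fun _ => (1:R)) hkm) /=.
by rewrite sumr_const card_ord.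
Qed.

Lemma kyfan_comb m k (s c : 'I_m -> R) : (0 < k)%N -> (k <= m)%N ->
  (forall i j : 'I_m, (i <= j)%N -> s j <= s i) ->
  (forall i, 0 <= c i <= 1) -> \sum_i c i = k%:R ->
  \sum_i s i * c i <= \sum_(i < m | (i < k)%N) s i.
Proof.
move=> hk0 hkm hs hc hsum.
have hk1 : (k.-1 < m)%N by rewrite (leq_trans _ hkm) // prednK.
set tau := s (Ordinal hk1).
have key i : s i * c i <= ((if (i < k)%N then s i else 0) + tau * c i)
    - tau * (if (i < k)%N then 1 else 0).
  have := hc i => /andP[c0 c1].
  case: ifP => hik.
    have : tau <= s i by apply: hs => /=; rewrite -ltnS prednK.
    move=> h; nra.
  have : s i <= tau by apply: hs => /=; move/negbT: hik; rewrite -leqNgt => hki; apply: leq_trans (leq_pred k) hki.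
  move=> h; nra.
apply: le_trans (ler_sum _ (fun i _ => key i)) _.
rewrite sumrB big_split /= -!mulr_sumr hsum sum_ind // -big_mkcond /=.
by rewrite addrK.
Qed.


Lemma jensen_seq n (I : 'I_n -> interval R) (f : ('I_n -> R) -> R) :
  convex_on_box I f -> forall (T : eqType) (r : seq T) (p : T -> R)
  (a : T -> 'I_n -> R),
  (forall j, 0 <= p j) -> (forall j i, a j i \in I i) ->
  \sum_(j <- r) p j = 1 ->
  (forall i, \sum_(j <- r) p j * a j i \in I i) /\
  f (fun i => \sum_(j <- r) p j * a j i) <= \sum_(j <- r) p j * f (a j).
Proof.
move=> hf T r; elim: r => [|j r IH] p a hp ha.
  by rewrite big_nil => /eqP; rewrite eq_sym oner_eq0.
rewrite big_cons => hsum.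
set S := \sum_(k <- r) p k.
have S0 : 0 <= S by rewrite /S sumr_ge0.
have hpj : p j = 1 - S by rewrite -hsum addrK.
case: (eqVneq S 0) => hS.
  have hz : forall k, k \in r -> p k = 0.
    move: hS => /eqP; rewrite /S psumr_eq0 // => /allP h k /h /=.
    by move/eqP.
  have hz2 (G : T -> R) : \sum_(k <- r) p k * G k = 0.
    by rewrite big_seq big1 // => k /hz ->; rewrite mul0r.
  split => [i|].
    by rewrite big_cons hz2 hpj hS subr0 addr0 mul1r; exact: ha.
  have -> : (fun i => \sum_(k <- j :: r) p k * a k i) = a j.
    apply: functional_extensionality => i.
    by rewrite big_cons hz2 hpj hS subr0 addr0 mul1r.
  by rewrite big_cons hz2 hpj hS subr0 addr0 mul1r.
have Sp : 0 < S by rewrite lt_neqAle eq_sym hS S0.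
pose q k := p k / S.
have hq : forall k, 0 <= q k by move=> k; rewrite /q divr_ge0.
have hqs : \sum_(k <- r) q k = 1.
  by rewrite /q -mulr_suml -/S mulfV.
have [IH1 IH2] := IH q a hq ha hqs.
have h1pj : 1 - p j = S by rewrite hpj; ring.
have hcomb i : \sum_(k <- j :: r) p k * a k i =
    p j * a j i + (1 - p j) * \sum_(k <- r) q k * a k i.
  rewrite big_cons h1pj mulr_sumr; congr (_ + _).
  by apply: eq_bigr => k _; rewrite /q mulrA mulrCA mulfV // mulr1.
have hpj1 : 0 <= p j <= 1 by rewrite hp hpj lerBlDr lerDl S0.
split => [i|].
  by rewrite hcomb; apply: itv_conv => //; exact: ha.
have -> : (fun i => \sum_(k <- j :: r) p k * a k i) =
   (fun i => p j * a j i + (1 - p j) * \sum_(k <- r) q k * a k i).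
  by apply: functional_extensionality => i; rewrite hcomb.
apply: le_trans (hf _ _ (ha j) IH1 _ hpj1) _.
rewrite big_cons lerD2l.
have -> : \sum_(k <- r) p k * f (a k) = (1 - p j) * \sum_(k <- r) q k * f (a k).
  rewrite h1pj mulr_sumr.
  by apply: eq_bigr => k _; rewrite /q mulrA mulrCA mulfV // mulr1.
by rewrite ler_wpM2l // h1pj.
Qed.


Lemma conj_diag_entry m (W U : 'M[C]_m) (g : 'I_m -> R) j :
  (W *m (U^t* *m diag_mx (\row_k toC (g k)) *m U) *m W^t*) j j =
  toC (\sum_p g p * sqn ((W *m U^t*) j p)).
Proof.
rewrite -diag_quad; congr (_ j j).
by rewrite trmx_mul map_mxM trmxCK !mulmxA.
Qed.

Lemma self_conj_entry m (W : 'M[C]_m) (g : 'I_m -> R) j : W \is unitarymx ->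
  (W *m (W^t* *m diag_mx (\row_k toC (g k)) *m W) *m W^t*) j j = toC (g j).
Proof.
move=> uW; rewrite !mulmxA unitary_r // mul1mx -mulmxA unitary_r // mulmx1.
by rewrite !mxE eqxx mulr1n.
Qed.

Lemma hermP m (A : 'M[C]_m) :
  reflect (forall i j, A i j = (A j i)^*) (A \is hermsymmx).
Proof.
apply: (iffP (is_hermitianmxP _ _ _)).
  by move=> h i j; rewrite {1}h expr0 scale1r !mxE.
move=> h; rewrite expr0 scale1r; apply/matrixP => i j.
by rewrite !mxE; exact: h.
Qed.

Lemma herm_diag m (U : 'M[C]_m) (g : 'I_m -> R) :
  U^t* *m diag_mx (\row_k toC (g k)) *m U \is hermsymmx.
Proof.
apply/is_hermitianmxP; rewrite expr0 scale1r.
rewrite !trmx_mul !map_mxM trmxCK mulmxA; congr (_ *m _ *m _).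
apply/matrixP => i j; rewrite !mxE rmorphMn.
case: (eqVneq i j) => [->|h]; first by rewrite !mulr1n; exact: (esym (toC_conj _)).
by rewrite !mulr0n.
Qed.

Lemma herm_comb m (A B : 'M[C]_m) (s t : R) :
  A \is hermsymmx -> B \is hermsymmx -> toC s *: A + toC t *: B \is hermsymmx.
Proof.
move=> /hermP hA /hermP hB; apply/hermP => i j.
rewrite !mxE rmorphD !rmorphM; congr (_ * _ + _ * _); first [exact: hA | exact: hB | exact: (esym (toC_conj _))].
Qed.


Lemma jfc_spec n m (f : ('I_n -> R) -> R) (xs : 'I_n -> 'M[C]_m) :
  (forall i, xs i \is hermsymmx) -> abelian_tuple xs ->
  exists U (d : 'I_n -> 'I_m -> R), [/\ U \is unitarymx,
    forall i, xs i = U^t* *m diag_mx (\row_k toC (d i k)) *m U &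
    jfc f xs = U^t* *m diag_mx (\row_k toC (f (fun i => d i k))) *m U].
Proof.
move=> hh hc; have [U [d [uU hx]]] := simdiag hh hc.
have hex : exists F, jfc_rel f xs F.
  exists (U^t* *m diag_mx (\row_k toC (f (fun i => (\row_k0 d i k0) 0 k))) *m U).
  exists U, (fun i => \row_k d i k); split.
  - exact: uU.
  - move=> i; have -> : map_mx (@toC R) (\row_k d i k) = \row_k toC (d i k).
      by apply/matrixP => a b; rewrite !mxE.
    exact: hx.
  - by [].
have := epsilon_spec (inhabits 0) (jfc_rel f xs) hex.
rewrite -/(jfc f xs) => -[U' [d' [uU' hx' hF']]].
exists U', (fun i k => d' i 0 k); split.
- exact: uU'.
- move=> i; have <- : map_mx (@toC R) (d' i) = \row_k toC (d' i 0 k).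
    by apply/matrixP => a b; rewrite !mxE (ord1 a).
  exact: hx'.
- exact: hF'.
Qed.

Lemma comb4 (V : lmodType C) (a b : C) (P1 P2 X1 X2 X3 X4 Q1 Q2 : V) :
  X1 + X2 = X3 + X4 -> P1 = P2 -> Q1 = Q2 ->
  (a * a) *: P1 + (a * b) *: X1 + ((b * a) *: X2 + (b * b) *: Q1) =
  (a * a) *: P2 + (a * b) *: X3 + ((b * a) *: X4 + (b * b) *: Q2).
Proof.
move=> E -> ->; rewrite [b * a]mulrC -!addrA; congr (_ + _).
rewrite !addrA; congr (_ + _).
by rewrite -!scalerDr E.
Qed.

Lemma comb_abelian n m (xs ys : 'I_n -> 'M[C]_m) (a b : C) :
  abelian_tuple xs -> abelian_tuple ys -> compatible xs ys ->
  abelian_tuple (fun i => a *: xs i + b *: ys i).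
Proof.
move=> hx hy hc i j /=.
have E : xs i *m ys j + ys i *m xs j = xs j *m ys i + ys j *m xs i.
  have := hc i j; rewrite /commut => h.
  rewrite -[xs i *m ys j](subrK (ys j *m xs i)) h.
  by rewrite addrAC subrK.
have sA : forall (c d : C) (A B : 'M[C]_m), (c *: A) *m (d *: B) = (c * d) *: (A *m B).
  by move=> c d A B; rewrite -scalemxAl -scalemxAr scalerA.
rewrite !mulmxDl !mulmxDr; do 8 rewrite sA.
exact: (comb4 a b E (hx i j) (hy i j)).
Qed.


Lemma lin_entry m (W A B : 'M[C]_m) (s t : C) j :
  (W *m (s *: A + t *: B) *m W^t*) j j =
  s * (W *m A *m W^t*) j j + t * (W *m B *m W^t*) j j.
Proof.
by rewrite mulmxDr mulmxDl -!scalemxAr -!scalemxAl !mxE.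
Qed.

Lemma conj_diag_entry' m (W U : 'M[C]_m) (g : 'I_m -> R) j :
  (W *m (U^t* *m diag_mx (\row_k toC (g k)) *m U) *m W^t*) j j =
  toC (\sum_p sqn ((W *m U^t*) j p) * g p).
Proof.
rewrite conj_diag_entry; congr toC; apply: eq_bigr => p _; exact: mulrC.
Qed.


Lemma key_ineq n m (I : 'I_n -> interval R) (f : ('I_n -> R) -> R) (l : R)
  (U V W Y : 'M[C]_m) (a b dz : 'I_n -> 'I_m -> R) (mu : 'I_m -> R) :
  convex_on_box I f -> 0 <= l <= 1 ->
  U \is unitarymx -> V \is unitarymx -> W \is unitarymx ->
  (forall i p, a i p \in I i) -> (forall i p, b i p \in I i) ->
  (forall i, W^t* *m diag_mx (\row_k toC (dz i k)) *m W =
     toC l *: (U^t* *m diag_mx (\row_k toC (a i k)) *m U) +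
     toC (1 - l) *: (V^t* *m diag_mx (\row_k toC (b i k)) *m V)) ->
  Y^t* *m diag_mx (\row_k toC (mu k)) *m Y =
    toC l *: (U^t* *m diag_mx (\row_k toC (f (fun i => a i k))) *m U) +
    toC (1 - l) *: (V^t* *m diag_mx (\row_k toC (f (fun i => b i k))) *m V) ->
  forall j, f (fun i => dz i j) <= \sum_p mu p * sqn ((W *m Y^t*) j p).
Proof.
move=> hf hl uU uV uW ha hb hz hY j.
have hl' : 0 <= 1 - l <= 1 by move: hl => /andP[h1 h2]; apply/andP; split; lra.
set px := fun p => sqn ((W *m U^t*) j p).
set py := fun p => sqn ((W *m V^t*) j p).
have px0 p : 0 <= px p by exact: sqn_ge0.
have py0 p : 0 <= py p by exact: sqn_ge0.
have uUt : U^t* \is unitarymx := etrans (trmxC_unitary U) uU.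
have uVt : V^t* \is unitarymx := etrans (trmxC_unitary V) uV.
have uQx : W *m U^t* \is unitarymx := mul_unitarymx uW uUt.
have uQy : W *m V^t* \is unitarymx := mul_unitarymx uW uVt.
have px1 : \sum_p px p = 1 := sqn_row j uQx.
have py1 : \sum_p py p = 1 := sqn_row j uQy.
have [jx1 jx2] := jensen_seq (r := index_enum 'I_m) hf px0
  (fun p i => ha i p) px1.
have [jy1 jy2] := jensen_seq (r := index_enum 'I_m) hf py0
  (fun p i => hb i p) py1.
have edz i : dz i j = l * (\sum_p px p * a i p) + (1 - l) * (\sum_p py p * b i p).
  apply: toC_inj; rewrite -(self_conj_entry (fun k => dz i k) j uW) hz lin_entry.
  by rewrite !conj_diag_entry' [RHS]toCD !toCM.
have emu : \sum_p mu p * sqn ((W *m Y^t*) j p) =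
    l * (\sum_p px p * f (fun i => a i p)) +
    (1 - l) * (\sum_p py p * f (fun i => b i p)).
  apply: toC_inj; rewrite -conj_diag_entry hY lin_entry.
  by rewrite !conj_diag_entry' [RHS]toCD !toCM.
have -> : (fun i => dz i j) = (fun i => l * (\sum_p px p * a i p) +
    (1 - l) * (\sum_p py p * b i p)).
  by apply: functional_extensionality => i; rewrite edz.
rewrite emu; apply: le_trans (hf _ _ jx1 jy1 _ hl) _.
move: hl => /andP[l0 l1].
apply: lerD; apply: ler_wpM2l => //; lra.
Qed.


Lemma core n m (I : 'I_n -> interval R) (f : ('I_n -> R) -> R) (l : R)
  (U V W : 'M[C]_m) (a b dz : 'I_n -> 'I_m -> R) :
  convex_on_box I f -> 0 <= l <= 1 ->
  U \is unitarymx -> V \is unitarymx -> W \is unitarymx ->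
  (forall i p, a i p \in I i) -> (forall i p, b i p \in I i) ->
  (forall i, W^t* *m diag_mx (\row_k toC (dz i k)) *m W =
     toC l *: (U^t* *m diag_mx (\row_k toC (a i k)) *m U) +
     toC (1 - l) *: (V^t* *m diag_mx (\row_k toC (b i k)) *m V)) ->
  weak_major (W^t* *m diag_mx (\row_k toC (f (fun i => dz i k))) *m W)
    (toC l *: (U^t* *m diag_mx (\row_k toC (f (fun i => a i k))) *m U) +
     toC (1 - l) *: (V^t* *m diag_mx (\row_k toC (f (fun i => b i k))) *m V)).
Proof.
move=> hf hl uU uV uW ha hb hz.
set M := _ + _.
have hM : M \is hermsymmx := herm_comb _ _ (herm_diag _ _) (herm_diag _ _).
have [Y [mu [uY hY]]] := @simdiag 1 m (fun _ => M) (fun _ => hM) (fun _ _ => erefl).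
have hY0 := hY ord0.
pose mu' k := mu ord0 k.
have key := key_ineq (mu := mu') hf hl uU uV uW ha hb hz (esym hY0).
have uYt : Y^t* \is unitarymx := etrans (trmxC_unitary Y) uY.
have uQ : W *m Y^t* \is unitarymx := mul_unitarymx uW uYt.
rewrite /weak_major => k /andP[k1 km].
rewrite hY0 (eigs_dec_diag _ uW) (eigs_dec_diag _ uY).
have [s [hs1 hs2]] := sort_perm (fun k => f (fun i => dz i k)).
have [t [ht1 ht2]] := sort_perm mu'.
rewrite !(big_ord_widen _ _ km).
rewrite (eq_bigr (fun i => f (fun i' => dz i' (s i)))); last by move=> i _; exact: hs1.
rewrite [X in _ <= X](eq_bigr (fun i => mu' (t i))); last by move=> i _; exact: ht1.
set r := fun j p => sqn ((W *m Y^t*) j p).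
apply: (@le_trans _ _ (\sum_(i < m | (i < k)%N) \sum_p mu' p * r (s i) p)).
  by apply: ler_sum => i _; exact: key.
set c := fun p => \sum_(i < m | (i < k)%N) r (s i) p.
have -> : \sum_(i < m | (i < k)%N) \sum_p mu' p * r (s i) p = \sum_p mu' p * c p.
  by rewrite exchange_big /=; apply: eq_bigr => p _; rewrite mulr_sumr.
have hc p : 0 <= c p <= 1.
  apply/andP; split; first by apply: sumr_ge0 => i _; exact: sqn_ge0.
  apply: (@le_trans _ _ (\sum_i r (s i) p)).
    rewrite [X in _ <= X](bigID (fun i : 'I_m => (i < k)%N)) /= lerDl.
    by apply: sumr_ge0 => i _; exact: sqn_ge0.
  have := sqn_col p uQ; rewrite (reindex_perm s) => <-.
  by [].
have hcs : \sum_p c p = k%:R.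
  rewrite /c exchange_big /=.
  rewrite (eq_bigr (fun _ => 1)); last by move=> i _; exact: (sqn_row (s i) uQ).
  by rewrite big_mkcond /= sum_ind.
rewrite (reindex_perm t) /=.
apply: kyfan_comb => //.
by move: hcs; rewrite (reindex_perm t).
Qed.
End Aux.

Theorem mainTheorem7 (R : realType) (n m : nat) (I : 'I_n -> interval R)
    (f : ('I_n -> R) -> R) (xs ys : 'I_n -> 'M[R[i]]_m) :
  convex_on_box I f ->
  (forall i, selfadj (xs i)) -> (forall i, selfadj (ys i)) ->
  abelian_tuple xs -> abelian_tuple ys ->
  (forall i, spec_in (xs i) (I i)) -> (forall i, spec_in (ys i) (I i)) ->
  compatible xs ys ->
  forall l : R, 0 <= l <= 1 ->
    weak_major
      (jfc f (fun i => toC l *: xs i + toC (1 - l) *: ys i))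
      (toC l *: jfc f xs + toC (1 - l) *: jfc f ys).
Proof.
move=> hf hx hy ax ay sx sy hc l hl.
have [U [a [uU hxa hFx]]] := jfc_spec f hx ax.
have [V [b [uV hyb hFy]]] := jfc_spec f hy ay.
have hzh : forall i, (toC l *: xs i + toC (1 - l) *: ys i) \is hermsymmx.
  by move=> i; apply: herm_comb; [exact: hx | exact: hy].
have hza := comb_abelian (toC l) (toC (1 - l)) ax ay hc.
have [W [dz [uW hzd hFz]]] := jfc_spec f hzh hza.
rewrite hFz hFx hFy.
apply: (core hf hl uU uV uW).
- move=> i p; have := sx i (toC (a i p)).
  rewrite hxa => /(_ (eig_diag _ p uU)) [t ht /toC_inj ->]; exact: ht.
- move=> i p; have := sy i (toC (b i p)).
  rewrite hyb => /(_ (eig_diag _ p uV)) [t ht /toC_inj ->]; exact: ht.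
- by move=> i; rewrite -hzd -hxa -hyb.
Qed.
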